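(* Let $\mathbf{r}:=(r_1,\ldots,r_k)$ be a $k$-tuple of elements of $\mathcal{B}$. There exists: (i) a formula $\theta_{\mathbf{r}}(u_1,\ldots,u_k)$ of $\{\exists,\forall,\wedge,\vee,=\}$-FO such that $(\mathcal{B}, r'_1,\ldots, r'_k) \models \theta_{\mathbf{r}}(u_1,\ldots,u_k)$ iff there is an automorphism from $(\mathcal{B}, r_1,\ldots, r_k)$ to $(\mathcal{B}, r'_1,\ldots, r'_k)$; (ii) a formula $\theta_{\mathbf{r}}(u_1,\ldots,u_k)$ of $\{\exists,\forall,\wedge,\vee\}$-FO such that $(\mathcal{B}, r'_1,\ldots, r'_k) \models \theta_{\mathbf{r}}(u_1,\ldots,u_k)$ iff there is a she from $(\mathcal{B}, r_1,\ldots, r_k)$ to $(\mathcal{B}, r'_1,\ldots, r'_k)$.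
   Context: $\mathcal{B}$ is a finite structure with domain $B$ over a finite relational signature. $\{\exists,\forall,\wedge,\vee\}$-FO (resp. $\{\exists,\forall,\wedge,\vee,=\}$-FO) is the positive fragment of first-order logic without (resp. with) equality. A hyper-operation on $B$ is a function $f:B\to\mathfrak{P}(B)\setminus\{\emptyset\}$; it is surjective if every $y\in B$ lies in some $f(x)$. A surjective hyper-endomorphism (she) of $\mathcal{B}$ is a surjective hyper-operation $f$ such that for every extensional relation $R$, if $\mathcal{B}\models R(x_1,\ldots,x_i)$ then $\mathcal{B}\models R(y_1,\ldots,y_i)$ for all $y_j\in f(x_j)$. $f$ is a she from $(\mathcal{B},r_1,\ldots,r_k)$ to $(\mathcal{B},r'_1,\ldots,r'_k)$ if $f$ is a she of $\mathcal{B}$ and $r'_j\in f(r_j)$ for all $j$. *)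

(* Defs.v *)
From mathcomp Require Import all_boot.
Set Implicit Arguments. Unset Strict Implicit. Unset Printing Implicit Defensive.

Definition interpretation (S : finType) (ar : S -> nat) (B : finType) :=
  forall s : S, pred ((ar s).-tuple B).

Inductive pformula (S : finType) (ar : S -> nat) : Type :=
| PTrue
| PFalse
| PRel (s : S) (args : (ar s).-tuple nat)
| PEq (x y : nat)
| PAnd (f g : pformula ar)
| POr (f g : pformula ar)
| PEx (x : nat) (f : pformula ar)
| PAll (x : nat) (f : pformula ar).

Arguments PTrue {S ar}.
Arguments PFalse {S ar}.

Fixpoint eq_free (S : finType) (ar : S -> nat) (f : pformula ar) : bool :=
  match f with
  | PEq _ _ => false
  | PAnd g h | POr g h => eq_free g && eq_free h
  | PEx _ g | PAll _ g => eq_free g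
  | _ => true
  end.

Definition upd (B : Type) (env : nat -> B) (x : nat) (b : B) : nat -> B :=
  fun y => if y == x then b else env y.

Fixpoint sat (S : finType) (ar : S -> nat) (B : finType) (I : interpretation ar B)
    (env : nat -> B) (f : pformula ar) : Prop :=
  match f with
  | PTrue => True
  | PFalse => False
  | PRel s args => I s (map_tuple env args)
  | PEq x y => env x = env y
  | PAnd g h => sat I env g /\ sat I env h
  | POr g h => sat I env g \/ sat I env h
  | PEx x g => exists b : B, sat I (upd env x b) g
  | PAll x g => forall b : B, sat I (upd env x b) g
  end.

Definition auto_from (S : finType) (ar : S -> nat) (B : finType) (I : interpretation ar B)
    (k : nat) (r r' : 'I_k -> B) : Prop :=
  exists f : B -> B,
    [/\ bijective f,
        (forall (s : S) (t : (ar s).-tuple B), I s t = I s (map_tuple f t))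
      & forall j : 'I_k, f (r j) = r' j].

(* surjective hyper-endomorphism *)
Definition is_she (S : finType) (ar : S -> nat) (B : finType) (I : interpretation ar B)
    (f : B -> {set B}) : Prop :=
  [/\ forall x, f x != set0,
      forall y, exists x, y \in f x
    & forall (s : S) (t t' : (ar s).-tuple B),
        I s t -> (forall j, tnth t' j \in f (tnth t j)) -> I s t'].

Definition she_from (S : finType) (ar : S -> nat) (B : finType) (I : interpretation ar B)
    (k : nat) (r r' : 'I_k -> B) : Prop :=
  exists f : B -> {set B}, is_she I f /\ forall j : 'I_k, r' j \in f (r j).

(* Main.v *)
Require Import Defs.
From mathcomp Require Import all_boot.
From mathcomp Require Import zify.
From Stdlib Require Import FunctionalExtensionality.
Set Implicit Arguments. Unset Strict Implicit. Unset Printing Implicit Defensive.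

Definition bigAnd (S : finType) (ar : S -> nat) (X : eqType) (xs : seq X)
  (F : X -> pformula ar) : pformula ar :=
  foldr (fun x acc => PAnd (F x) acc) PTrue xs.
Definition bigOr (S : finType) (ar : S -> nat) (X : eqType) (xs : seq X)
  (F : X -> pformula ar) : pformula ar :=
  foldr (fun x acc => POr (F x) acc) PFalse xs.

Lemma sat_bigAnd (S : finType) (ar : S -> nat) (B : finType) (I : interpretation ar B)
  env (X : eqType) (xs : seq X) (F : X -> pformula ar) :
  sat I env (bigAnd xs F) <-> forall x, x \in xs -> sat I env (F x).
Proof.
elim: xs => [|x xs [IH1 IH2]] /=; first by split.
split.
- move=> [H1 H2] y; rewrite in_cons => /orP[/eqP->|Hy] //; exact: IH1.
- move=> H; split; first by apply: H; exact: mem_head.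
  apply: IH2 => y Hy; apply: H; by rewrite in_cons Hy orbT.
Qed.

Lemma sat_bigOr (S : finType) (ar : S -> nat) (B : finType) (I : interpretation ar B)
  env (X : eqType) (xs : seq X) (F : X -> pformula ar) :
  sat I env (bigOr xs F) <-> exists2 x, x \in xs & sat I env (F x).
Proof.
elim: xs => [|x xs [IH1 IH2]] /=; first by split => // -[].
split.
- move=> [H|/IH1 [y Hy H]]; first by exists x => //; exact: mem_head.
  by exists y => //; rewrite in_cons Hy orbT.
- move=> [y]; rewrite in_cons => /orP[/eqP->|Hy] H; first by left.
  by right; apply: IH2; exists y.
Qed.

Lemma sat_exB (S : finType) (ar : S -> nat) (B : finType) (I : interpretation ar B)
  (vs : seq nat) (f : pformula ar) env :
  sat I env (foldr (@PEx S ar) f vs) <->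
  exists env', (forall y, y \notin vs -> env' y = env y) /\ sat I env' f.
Proof.
elim: vs env => [|v vs IH] env /=.
- split; first by move=> H; exists env.
  move=> [e [He Hs]]; have Ee : e = env by apply: functional_extensionality => y; exact: He.
  by rewrite -Ee.
- split.
  + move=> [b /IH [e [He Hs]]]; exists e; split=> // y.
    rewrite in_cons negb_or => /andP[Hyv Hy]; by rewrite He // /upd (negbTE Hyv).
  + move=> [e [He Hs]]; exists (e v); apply/IH; exists e; split=> // y Hy.
    rewrite /upd; case: eqP => [->//|/eqP Hyv]; apply: He.
    by rewrite in_cons negb_or Hyv Hy.
Qed.

Lemma sat_allB (S : finType) (ar : S -> nat) (B : finType) (I : interpretation ar B)
  (vs : seq nat) (f : pformula ar) env :
  sat I env (foldr (@PAll S ar) f vs) <->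
  forall env', (forall y, y \notin vs -> env' y = env y) -> sat I env' f.
Proof.
elim: vs env => [|v vs IH] env /=.
- split; last by apply.
  move=> H e He; have Ee : e = env by apply: functional_extensionality => y; exact: He.
  by rewrite Ee.
- split.
  + move=> H e He; have := H (e v); move/IH; apply => y Hy.
    rewrite /upd; case: eqP => [->//|/eqP Hyv]; apply: He.
    by rewrite in_cons negb_or Hyv Hy.
  + move=> H b; apply/IH => e He; apply: H => y.
    rewrite in_cons negb_or => /andP[Hyv Hy]; by rewrite He // /upd (negbTE Hyv).
Qed.

Lemma ef_bigAnd (S : finType) (ar : S -> nat) (X : eqType) (xs : seq X) (F : X -> pformula ar) :
  (forall x, eq_free (F x)) -> eq_free (bigAnd xs F).
Proof. by move=> H; elim: xs => //= x xs ->; rewrite H. Qed.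
Lemma ef_bigOr (S : finType) (ar : S -> nat) (X : eqType) (xs : seq X) (F : X -> pformula ar) :
  (forall x, eq_free (F x)) -> eq_free (bigOr xs F).
Proof. by move=> H; elim: xs => //= x xs ->; rewrite H. Qed.
Lemma ef_exB (S : finType) (ar : S -> nat) vs (f : pformula ar) :
  eq_free f -> eq_free (foldr (@PEx S ar) f vs).
Proof. by move=> H; elim: vs. Qed.
Lemma ef_allB (S : finType) (ar : S -> nat) vs (f : pformula ar) :
  eq_free f -> eq_free (foldr (@PAll S ar) f vs).
Proof. by move=> H; elim: vs. Qed.

Lemma inj_pres_refl (T : finType) (g : T -> T) (P : pred T) :
  injective g -> (forall x, P x -> P (g x)) -> forall x, P (g x) -> P x.
Proof.
move=> ginj HP x Hgx.
have sub : g @: [set y | P y] \subset [set y | P y].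
  apply/subsetP => z /imsetP [y Hy ->]; rewrite !inE; apply: HP; by rewrite !inE in Hy.
have eqA : g @: [set y | P y] = [set y | P y].
  by apply/eqP; rewrite eqEcard sub card_imset //=.
have : g x \in g @: [set y | P y] by rewrite eqA inE.
by rewrite mem_imset // inE.
Qed.

Definition ovr (B : finType) (f : B -> nat) (g : B -> B) (env : nat -> B) (y : nat) : B :=
  if [pick b | f b == y] is Some b then g b else env y.

Lemma ovr_in (B : finType) (f : B -> nat) g env b :
  injective f -> ovr f g env (f b) = g b.
Proof.
move=> finj; rewrite /ovr; case: pickP => [b' /eqP /finj -> //|/(_ b)].
by rewrite eqxx.
Qed.

Lemma ovr_out (B : finType) (f : B -> nat) g env y :
  y \notin [seq f b | b <- enum B] -> ovr f g env y = env y.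
Proof.
move=> Hy; rewrite /ovr; case: pickP => [b /eqP Hb|//].
by move: Hy; rewrite -Hb map_f // mem_enum.
Qed.

Lemma notin_map (B : finType) (f : B -> nat) y :
  (forall b, f b != y) -> y \notin [seq f b | b <- enum B].
Proof. by move=> H; apply/mapP => -[b _ Hb]; move: (H b); rewrite Hb eqxx. Qed.

Lemma rank_lt (B : finType) (b : B) : enum_rank b < #|B|.
Proof. exact: ltn_ord. Qed.

Definition wv (k : nat) (B : finType) (b : B) : nat := k + enum_rank b.
Definition zv (k : nat) (B : finType) (b : B) : nat := k + #|B| + enum_rank b.

Lemma wv_inj k (B : finType) : injective (@wv k B).
Proof. by move=> b1 b2 /addnI /ord_inj /enum_rank_inj. Qed.
Lemma zv_inj k (B : finType) : injective (@zv k B).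
Proof. by move=> b1 b2 /addnI /ord_inj /enum_rank_inj. Qed.

Lemma map_tuple_comp (A C D : Type) n (f : A -> C) (g : C -> D) (t : n.-tuple A) :
  map_tuple g (map_tuple f t) = map_tuple (fun a => g (f a)) t.
Proof. by apply: eq_from_tnth => j; rewrite !tnth_map. Qed.

Definition D1 (S : finType) (ar : S -> nat) (B : finType) (I : interpretation ar B) (k : nat)
  : pformula ar :=
  bigAnd (enum S) (fun s => bigAnd (enum {: (ar s).-tuple B})
    (fun t => if I s t then @PRel S ar s (map_tuple (@wv k B) t) else PTrue)).

Definition U1 (S : finType) (ar : S -> nat) (B : finType) (k : nat) (r : 'I_k -> B)
  : pformula ar := bigAnd (enum 'I_k) (fun j => PEq ar (val j) (wv k (r j))).

Definition Sj (S : finType) (ar : S -> nat) (B : finType) (k : nat) : pformula ar :=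
  PAll (k + #|B|) (bigOr (enum B) (fun b => PEq ar (k + #|B|) (wv k b))).

Definition theta1 (S : finType) (ar : S -> nat) (B : finType) (I : interpretation ar B)
  (k : nat) (r : 'I_k -> B) : pformula ar :=
  foldr (@PEx S ar) (PAnd (D1 I k) (PAnd (U1 ar r) (Sj ar B k))) [seq wv k b | b <- enum B].

Definition cand (B : finType) (k : nat) (r : 'I_k -> B) (tau : {ffun B -> B}) (c : B) : seq nat :=
  wv k c :: [seq val j | j <- enum 'I_k & r j == c] ++ [seq zv k b | b <- enum B & tau b == c].

Definition D2 (S : finType) (ar : S -> nat) (B : finType) (I : interpretation ar B)
  (k : nat) (r : 'I_k -> B) (tau : {ffun B -> B}) : pformula ar :=
  bigAnd (enum S) (fun s => bigAnd (enum {: (ar s).-tuple B})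
    (fun t => if I s t then
       bigAnd (enum {: (ar s).-tuple 'I_(k + #|B| + #|B|).+1})
         (fun y => if [forall j, val (tnth y j) \in cand r tau (tnth t j)]
                   then @PRel S ar s (map_tuple (fun i : 'I_(k + #|B| + #|B|).+1 => val i) y)
                   else PTrue)
       else PTrue)).

Definition theta2 (S : finType) (ar : S -> nat) (B : finType) (I : interpretation ar B)
  (k : nat) (r : 'I_k -> B) : pformula ar :=
  foldr (@PAll S ar)
    (bigOr (enum {: {ffun B -> B}})
       (fun tau => foldr (@PEx S ar) (D2 I r tau) [seq wv k b | b <- enum B]))
    [seq zv k b | b <- enum B].


Lemma part1 (S : finType) (ar : S -> nat) (B : finType) (I : interpretation ar B)
    (k : nat) (r : 'I_k -> B) (r' : 'I_k -> B) (env : nat -> B) :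
  (forall j : 'I_k, env j = r' j) ->
  (sat I env (theta1 I r) <-> auto_from I r r').
Proof.
move=> Henv.
have jout : forall j : 'I_k, val j \notin [seq wv k b | b <- enum B].
  move=> j; apply: notin_map => b; apply/eqP; rewrite /wv /=; have := ltn_ord j; lia.
split.
- move=> /sat_exB [e [He [HD [HU HS]]]].
  rewrite /Sj in HS; simpl in HS.
  pose f := fun b : B => e (wv k b).
  have fsurj : forall x, f (odflt x [pick b | f b == x]) = x.
    move=> x; case: pickP => [b /eqP //|none].
    have := HS x; move/sat_bigOr => [b _] /=.
    have Hne : wv k b != k + #|B| by rewrite /wv; apply/eqP; have := rank_lt b; lia.
    rewrite /upd eqxx (negbTE Hne).
    by move=> Hx; move: (none b); rewrite /f -Hx eqxx.
  pose g := fun x : B => odflt x [pick b | f b == x].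
  have ginj : injective g by apply: (can_inj fsurj).
  have [g' gg' g'g] := injF_bij ginj.
  have fE : forall y, f y = g' y by move=> y; rewrite -{1}(g'g y) fsurj.
  have finj : injective f.
    by move=> y1 y2; rewrite !fE => /(congr1 g); rewrite !g'g.
  exists f; split.
  + by exists g => [y|x]; [rewrite fE g'g | exact: fsurj].
  + move=> s t.
    have fwd : forall t0 : (ar s).-tuple B, I s t0 -> I s (map_tuple f t0).
      move=> t0 Ht0; move/sat_bigAnd: HD => /(_ s (mem_enum _ _)) /sat_bigAnd.
      move=> /(_ t0 (mem_enum _ _)); rewrite Ht0 /= map_tuple_comp //.
    have minj : injective (fun t0 : (ar s).-tuple B => map_tuple f t0).
      by move=> t1 t2 /(congr1 val) /= /(inj_map finj) /val_inj.
    apply/idP/idP; first exact: fwd.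
    exact: (inj_pres_refl minj fwd).
  + move=> j; rewrite /f; move/sat_bigAnd: HU => /(_ j (mem_enum _ _)) /= <-.
    by rewrite (He _ (jout j)) Henv.
- move=> [f [[g fg gf] Hrel Hr]]; apply/sat_exB.
  exists (ovr (@wv k B) f env); split; first by move=> y; exact: ovr_out.
  have eW : forall b, ovr (@wv k B) f env (wv k b) = f b.
    by move=> b; rewrite ovr_in //; exact: wv_inj.
  split; last split.
  + apply/sat_bigAnd => s _; apply/sat_bigAnd => t _.
    case Hst: (I s t) => //=; rewrite map_tuple_comp.
    have -> : map_tuple (fun a => ovr (@wv k B) f env (wv k a)) t = map_tuple f t.
      by apply: eq_from_tnth => j; rewrite !tnth_map eW.
    by rewrite -Hrel.
  + apply/sat_bigAnd => j _ /=; by rewrite eW (ovr_out _ _ (jout j)) Henv Hr.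
  + move=> x; apply/sat_bigOr; exists (g x); first exact: mem_enum.
    have Hne : wv k (g x) != k + #|B| by rewrite /wv; apply/eqP; have := rank_lt (g x); lia.
    rewrite /= /upd eqxx (negbTE Hne).
    by rewrite eW gf.
Qed.


Lemma part2 (S : finType) (ar : S -> nat) (B : finType) (I : interpretation ar B)
    (k : nat) (r : 'I_k -> B) (r' : 'I_k -> B) (env : nat -> B) :
  (forall j : 'I_k, env j = r' j) ->
  (sat I env (theta2 I r) <-> she_from I r r').
Proof.
move=> Henv.
have jw : forall j : 'I_k, val j \notin [seq wv k b | b <- enum B].
  move=> j; apply: (notin_map (f := @wv k B)) => b; apply/eqP; rewrite /wv /=; have := ltn_ord j; lia.
have jz : forall j : 'I_k, val j \notin [seq zv k b | b <- enum B].
  move=> j; apply: (notin_map (f := @zv k B)) => b; apply/eqP; rewrite /zv /=; have := ltn_ord j; lia.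
have zw : forall c : B, zv k c \notin [seq wv k b | b <- enum B].
  move=> c; apply: (@notin_map B (@wv k B) (zv k c)) => b; apply/eqP; rewrite /zv /wv.
  have := rank_lt b; have := rank_lt c; lia.
have wz : forall c : B, wv k c \notin [seq zv k b | b <- enum B].
  move=> c; apply: (notin_map (f := @zv k B)) => b; apply/eqP; rewrite /zv /wv.
  have := rank_lt b; have := rank_lt c; lia.
split.
- move=> /sat_allB H.
  have := H (ovr (@zv k B) id env) (fun y Hy => ovr_out _ _ Hy).
  move=> /sat_bigOr [tau _] /sat_exB [e [He HD]].
  have eZ : forall b, e (zv k b) = b.
    by move=> b; rewrite (He _ (zw b)) ovr_in //; exact: zv_inj.
  have eJ : forall j : 'I_k, e j = r' j.
    by move=> j; rewrite (He _ (jw j)) (ovr_out _ _ (jz j)) Henv.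
  pose M := (k + #|B| + #|B|).+1.
  pose F := fun c : B => [set x | [exists v : 'I_M, (val v \in cand r tau c) && (e v == x)]].
  exists F; split; last first.
    move=> j; rewrite inE; apply/existsP.
    have jM : val j < M by rewrite /M /=; have := ltn_ord j; lia.
    exists (Ordinal jM); rewrite /= eJ eqxx andbT /cand in_cons mem_cat.
    apply/orP; right; apply/orP; left; apply/mapP; exists j => //.
    by rewrite mem_filter eqxx mem_enum.
  split.
  + move=> c; apply/set0Pn; exists (e (wv k c)); rewrite inE; apply/existsP.
    have cM : wv k c < M by rewrite /M /wv; have := rank_lt c; lia.
    by exists (Ordinal cM); rewrite /= /cand mem_head eqxx.
  + move=> y; exists (tau y); rewrite inE; apply/existsP.
    have yM : zv k y < M by rewrite /M /zv; have := rank_lt y; lia.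
    exists (Ordinal yM); rewrite /= eZ eqxx andbT /cand in_cons mem_cat.
    apply/orP; right; apply/orP; right; apply/mapP; exists y => //.
    by rewrite mem_filter eqxx mem_enum.
  + move=> s t t' Hst Ht'.
    pose ch := fun j => odflt ord0 [pick v : 'I_M | (val v \in cand r tau (tnth t j)) && (e v == tnth t' j)].
    have chP : forall j, (val (ch j) \in cand r tau (tnth t j)) && (e (ch j) == tnth t' j).
      move=> j; rewrite /ch; case: pickP => [v Hv //|none].
      have := Ht' j; rewrite inE => /existsP [v Hv].
      by move: (none v); rewrite Hv.
    pose y := [tuple ch j | j < ar s].
    move/sat_bigAnd: HD => /(_ s (mem_enum _ _)) /sat_bigAnd /(_ t (mem_enum _ _)).
    rewrite Hst => /sat_bigAnd /(_ y (mem_enum _ _)).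
    have -> : [forall j, val (tnth y j) \in cand r tau (tnth t j)].
      by apply/forallP => j; rewrite tnth_mktuple; case/andP: (chP j).
    rewrite /= map_tuple_comp.
    have -> : map_tuple (fun a => e (val a)) y = t'.
      apply: eq_from_tnth => j; rewrite tnth_map tnth_mktuple.
      by case/andP: (chP j) => _ /eqP.
    done.
- move=> [F [[Fne Fsurj Fpres] Fr]]; apply/sat_allB => e0 He0; apply/sat_bigOr.
  pose tau := [ffun b => odflt b [pick c | e0 (zv k b) \in F c]].
  have tauP : forall b, e0 (zv k b) \in F (tau b).
    move=> b; rewrite ffunE; case: pickP => [c //|none].
    have [x Hx] := Fsurj (e0 (zv k b)); by move: (none x); rewrite Hx.
  pose ws := fun c => odflt c [pick x | x \in F c].
  have wsP : forall c, ws c \in F c.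
    move=> c; rewrite /ws; case: pickP => [x //|none].
    have /set0Pn [x Hx] := Fne c; by move: (none x); rewrite Hx.
  exists tau; first exact: mem_enum.
  apply/sat_exB; exists (ovr (@wv k B) ws e0); split; first by move=> y; exact: ovr_out.
  set e := ovr (@wv k B) ws e0.
  have key : forall c v, v \in cand r tau c -> e v \in F c.
    move=> c v; rewrite /cand in_cons mem_cat => /orP [/eqP ->|/orP [/mapP [j]|/mapP [b]]].
    * by rewrite /e ovr_in //; exact: wv_inj.
    * rewrite mem_filter => /andP [/eqP <- _] ->.
      rewrite /e (ovr_out _ _ (jw j)) He0 ?Henv //; exact: jz.
    * rewrite mem_filter => /andP [/eqP <- _] ->.
      by rewrite /e (ovr_out _ _ (zw b)).
  apply/sat_bigAnd => s _; apply/sat_bigAnd => t _.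
  case Hst: (I s t) => //; apply/sat_bigAnd => y _.
  case: ifP => // /forallP Hy /=.
  apply: (Fpres s t _ Hst) => j; rewrite !tnth_map; apply: key; exact: Hy.
Qed.

Theorem lemma2p1 (S : finType) (ar : S -> nat) (B : finType) (I : interpretation ar B)
    (k : nat) (r : 'I_k -> B) :
  (exists theta : pformula ar,
     forall (r' : 'I_k -> B) (env : nat -> B),
       (forall j : 'I_k, env j = r' j) ->
       (sat I env theta <-> auto_from I r r'))
  /\
  (exists theta : pformula ar,
     eq_free theta /\
     forall (r' : 'I_k -> B) (env : nat -> B),
       (forall j : 'I_k, env j = r' j) ->
       (sat I env theta <-> she_from I r r')).
Proof.
split.
- exists (theta1 I r) => r' env Henv; exact: part1.
- exists (theta2 I r); split; last by move=> r' env Henv; exact: part2.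
  apply: ef_allB; apply: ef_bigOr => tau; apply: ef_exB.
  apply: ef_bigAnd => s; apply: ef_bigAnd => t; case: (I s t) => //.
  by apply: ef_bigAnd => y; case: ifP.
Qed.
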